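(* Let $d$ be a positive integer and $H$ a complex Hilbert space. Let $T=(T_1,\ldots,T_d)$ and $\tilde T=(\tilde T_1,\ldots,\tilde T_d)$ be two commuting operator-valued multishifts on $\ell^2_H(\mathbb N^d)$ with respective unitary operator weights $\{A^{(j)}_\alpha:\alpha\in\mathbb N^d,\ j=1,\ldots,d\}$ and $\{\tilde A^{(j)}_\alpha:\alpha\in\mathbb N^d,\ j=1,\ldots,d\}$. Then $T$ and $\tilde T$ are unitarily equivalent, i.e. there is a unitary $U$ on $\ell^2_H(\mathbb N^d)$ with $UT_jU^*=\tilde T_j$ for all $j=1,\ldots,d$.
   Context: $\mathbb N$ denotes the nonnegative integers; $\varepsilon_j\in\mathbb N^d$ has $1$ in the $j$-th place and $0$ elsewhere. $\ell^2_H(\mathbb N^d)=\bigoplus_{\alpha\in\mathbb N^d}H$ is the orthogonal direct sum of copies of $H$ indexed by $\mathbb N^d$. Given bounded operators $A^{(j)}_\alpha:H\to H$ ($\alpha\in\mathbb N^d$, $j=1,\ldots,d$), the operator-valued multishift with these operator weights is the $d$-tuple $T=(T_1,\ldots,T_d)$ defined by $T_j(\oplus_\alpha x_\alpha)=\oplus_\alpha A^{(j)}_{\alpha-\varepsilon_j}x_{\alpha-\varepsilon_j}$, where the term is interpreted as $0$ when $\alpha_j=0$ (with domain $\{x:\sum_\alpha\|A^{(j)}_\alpha x_\alpha\|^2<\infty\}$). It is called a commuting operator-valued multishift if $\sup_{\alpha}\|A^{(j)}_\alpha\|<\infty$ for each $j$ and $A^{(i)}_{\alpha+\varepsilon_j}A^{(j)}_\alpha=A^{(j)}_{\alpha+\varepsilon_i}A^{(i)}_\alpha$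 for all $\alpha\in\mathbb N^d$ and $i,j=1,\ldots,d$. *)

(* Defs.v *)
From HB Require Import structures.
From mathcomp Require Import all_boot all_order all_algebra.
From mathcomp Require Import complex.
From mathcomp Require Import boolp classical_sets reals.
Set Implicit Arguments. Unset Strict Implicit. Unset Printing Implicit Defensive.
Import Order.TTheory GRing.Theory Num.Theory.
Local Open Scope ring_scope.

Section Hilbert.
Variable R : realType.
Local Notation C := (R[i])%type.

Definition inner_product (H : lmodType C) (ip : H -> H -> C) : Prop :=
  [/\ (forall (a : C) (x y z : H), ip (a *: x + y) z = a * ip x z + ip y z),
      (forall x y : H, ip y x = (ip x y)^*),
      (forall x : H, 0 <= ip x x) &
      (forall x : H, ip x x = 0 -> x = 0)].

Definition hnorm (H : lmodType C) (ip : H -> H -> C) (x : H) : R :=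
  Num.sqrt (complex.Re (ip x x)).

Definition hilbert_space (H : lmodType C) (ip : H -> H -> C) : Prop :=
  inner_product ip /\
  forall u : nat -> H,
    (forall e : R, 0 < e -> exists N : nat, forall m n : nat,
        (N <= m)%N -> (N <= n)%N -> hnorm ip (u m - u n) < e) ->
    exists l : H, forall e : R, 0 < e -> exists N : nat, forall n : nat,
        (N <= n)%N -> hnorm ip (u n - l) < e.

Definition linear_op (H : lmodType C) (f : H -> H) : Prop :=
  forall (a : C) (x y : H), f (a *: x + y) = a *: f x + f y.

Definition unitary_op (H : lmodType C) (ip : H -> H -> C) (f : H -> H) : Prop :=
  [/\ linear_op f,
      (forall x : H, hnorm ip (f x) = hnorm ip x) &
      (forall y : H, exists x : H, f x = y)].

Definition mindex (d : nat) := {ffun 'I_d -> nat}.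

Definition addeps d (a : mindex d) (j : 'I_d) : mindex d :=
  [ffun k => if k == j then (a k).+1 else a k].
Definition subeps d (a : mindex d) (j : 'I_d) : mindex d :=
  [ffun k => if k == j then (a k).-1 else a k].

Definition psum (H : lmodType C) (ip : H -> H -> C) d (x : mindex d -> H)
  (s : seq (mindex d)) : R :=
  \sum_(a <- s) hnorm ip (x a) ^+ 2.

Definition l2 (H : lmodType C) (ip : H -> H -> C) d (x : mindex d -> H) : Prop :=
  exists M : R, forall s : seq (mindex d), uniq s -> psum ip x s <= M.

Definition l2nsq (H : lmodType C) (ip : H -> H -> C) d (x : mindex d -> H) : R :=
  sup [set psum ip x s | s in [set s : seq (mindex d) | uniq s]]%classic.

Definition unitary_l2 (H : lmodType C) (ip : H -> H -> C) d
  (U : (mindex d -> H) -> (mindex d -> H)) : Prop :=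
  [/\ (forall x, l2 ip x -> l2 ip (U x)),
      (forall (a : C) x y, l2 ip x -> l2 ip y ->
          U (fun b => a *: x b + y b) = (fun b => a *: U x b + U y b)),
      (forall x, l2 ip x -> l2nsq ip (U x) = l2nsq ip x) &
      (forall y, l2 ip y -> exists2 x, l2 ip x & U x = y)].

Definition weights (H : lmodType C) d := mindex d -> 'I_d -> H -> H.

Definition mshift (H : lmodType C) d (A : weights H d) (j : 'I_d)
  (x : mindex d -> H) : mindex d -> H :=
  fun a => if a j == 0%N then 0 else A (subeps a j) j (x (subeps a j)).

Definition mshift_dom (H : lmodType C) (ip : H -> H -> C) d (A : weights H d)
  (j : 'I_d) (x : mindex d -> H) : Prop :=
  l2 ip x /\ l2 ip (fun a => A a j (x a)).

Definition commuting_multishift (H : lmodType C) (ip : H -> H -> C) d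
  (A : weights H d) : Prop :=
  [/\ (forall a j, linear_op (A a j)),
      (forall j, exists M : R, forall a x, hnorm ip (A a j x) <= M * hnorm ip x) &
      (forall a i j x, A (addeps a j) i (A a j x) = A (addeps a i) j (A a i x))].

End Hilbert.

(* Main.v *)
Require Import Defs.
From HB Require Import structures.
From mathcomp Require Import all_boot all_order all_algebra.
From mathcomp Require Import complex.
From mathcomp Require Import boolp classical_sets reals.
Set Implicit Arguments. Unset Strict Implicit. Unset Printing Implicit Defensive.
Import Order.TTheory GRing.Theory Num.Theory.
Local Open Scope ring_scope.

Section Paths.
Variables (R : realType) (d : nat) (H : lmodType R[i]) (A : weights H d).
Hypothesis Acomm : forall a i j x,
  A (addeps a j) i (A a j x) = A (addeps a i) j (A a i x).

Definition ep (s : seq 'I_d) : mindex d := [ffun k => count_mem k s].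

Fixpoint Q (s : seq 'I_d) : H -> H :=
  match s with [::] => id | j :: s' => fun x => A (ep s') j (Q s' x) end.

Lemma ep_cons j s : ep (j :: s) = addeps (ep s) j.
Proof.
apply/ffunP => k; rewrite !ffunE /= eq_sym.
by case: (k == j).
Qed.

Lemma ep_perm s t : perm_eq s t -> ep s = ep t.
Proof. by move=> h; apply/ffunP => k; rewrite !ffunE; apply: (permP h). Qed.

Lemma perm_ep s t : ep s = ep t -> perm_eq s t.
Proof.
move=> h; rewrite /perm_eq; apply/allP => x _ /=; apply/eqP.
by have := congr1 (fun f : mindex d => f x) h; rewrite !ffunE.
Qed.

Lemma Q_rem j t : j \in t -> forall x, Q t x = Q (j :: rem j t) x.
Proof.
elim: t => [|i t IH]; first by rewrite in_nil.
rewrite in_cons /=; case: (eqVneq j i) => [<- _ x|ne /= jt x]; first by [].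
have pt : perm_eq t (j :: rem j t) by apply: perm_to_rem.
by rewrite (IH jt x) /= (ep_perm pt) !ep_cons Acomm.
Qed.

Lemma Q_perm s t : perm_eq s t -> forall x, Q s x = Q t x.
Proof.
elim: s t => [|j s IH] t h x.
  by move: h; rewrite perm_sym => /perm_nilP ->.
have jt : j \in t by rewrite -(perm_mem h) mem_head.
rewrite (Q_rem jt) /=.
have h' : perm_eq s (rem j t).
  by rewrite -(perm_cons j); apply: (perm_trans h); apply: perm_to_rem.
by rewrite (ep_perm h') (IH _ h').
Qed.

Definition mpath (a : mindex d) : seq 'I_d :=
  flatten [seq nseq (a i) i | i <- enum 'I_d].

Lemma ep_mpath a : ep (mpath a) = a.
Proof.
apply/ffunP => k; rewrite ffunE /mpath count_flatten -map_comp sumnE big_map.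
rewrite (bigD1_seq k) ?mem_enum ?enum_uniq //= count_nseq.
rewrite /= eqxx mul1n big1 ?addn0 //.
by move=> i ne; rewrite count_nseq /= (negbTE ne) mul0n.
Qed.

Definition P a := Q (mpath a).

Lemma P_add a j x : P (addeps a j) x = A a j (P a x).
Proof.
rewrite /P (@Q_perm _ (j :: mpath a)) /= ?ep_mpath //.
by apply: perm_ep; rewrite ep_cons !ep_mpath.
Qed.
End Paths.

Section Unit.
Variables (R : realType) (H : lmodType R[i]) (ip : H -> H -> R[i]).
Hypothesis ipH : inner_product ip.

Lemma lin0 (f : H -> H) : linear_op f -> f 0 = 0.
Proof.
move=> lf; have := lf 1 0 0; rewrite !scale1r addr0 => e.
by apply: (addrI (f 0)); rewrite addr0 -e.
Qed.

Lemma linB (f : H -> H) x y : linear_op f -> f (x - y) = f x - f y.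
Proof.
move=> lf; have := lf (-1) y x.
by rewrite !scaleN1r addrC => ->; rewrite addrC.
Qed.

Lemma ip0 z : ip 0 z = 0.
Proof.
case: ipH => h _ _ _; have := h 1 0 0 z; rewrite scale1r addr0 mul1r => e.
by apply: (addrI (ip 0 z)); rewrite addr0 -e.
Qed.

Lemma hnorm0 : hnorm ip 0 = 0.
Proof. by rewrite /hnorm ip0 /= sqrtr0. Qed.

Lemma hnorm_eq0 x : hnorm ip x = 0 -> x = 0.
Proof.
move=> /eqP; rewrite /hnorm sqrtr_eq0 => h.
case: ipH => _ _ hp hz; apply: hz.
have := hp x; rewrite lecE /= => /andP[/eqP hi hr].
move: hi hr h; case: (ip x x) => a b /= -> ha hb.
by have -> : a = 0 by apply/eqP; rewrite eq_le hb ha.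
Qed.

Lemma unitary_inj f : unitary_op ip f -> injective f.
Proof.
case=> lf hn _ x y e; apply/eqP; rewrite -subr_eq0; apply/eqP/hnorm_eq0.
by rewrite -hn linB // e subrr hnorm0.
Qed.

Lemma unitary_id : unitary_op ip id.
Proof. by split => // y; exists y. Qed.

Lemma unitary_comp f g : unitary_op ip f -> unitary_op ip g -> unitary_op ip (f \o g).
Proof.
case=> lf nf sf [lg ng sg]; split.
- by move=> a x y /=; rewrite lg lf.
- by move=> x /=; rewrite nf ng.
- move=> y; have [z <-] := sf y; have [x <-] := sg z; by exists x.
Qed.

Definition finv (f : H -> H) (hs : forall y, exists x, f x = y) (y : H) : H :=
  projT1 (cid (hs y)).

Lemma finvK f hs y : f (@finv f hs y) = y.
Proof. by rewrite /finv; case: cid. Qed.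

End Unit.

Section Main.
Variables (R : realType) (d : nat) (H : lmodType R[i]) (ip : H -> H -> R[i]).
Hypothesis ipH : inner_product ip.

Lemma Q_unitary (A : weights H d) : (forall a j, unitary_op ip (A a j)) ->
  forall s, unitary_op ip (Q A s).
Proof.
move=> hA; elim=> [|j s IH] /=; first exact: unitary_id.
exact: (unitary_comp (hA _ _) IH).
Qed.

Lemma psum_ext (x y : mindex d -> H) :
  (forall b, hnorm ip (x b) = hnorm ip (y b)) -> psum ip x = psum ip y.
Proof.
move=> h; apply: funext => s; rewrite /psum; apply: eq_bigr => b _; by rewrite h.
Qed.

Lemma l2_ext (x y : mindex d -> H) :
  (forall b, hnorm ip (x b) = hnorm ip (y b)) -> l2 ip x <-> l2 ip y.
Proof. by move=> h; rewrite /l2 (psum_ext h). Qed.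

Lemma addeps_subeps (b : mindex d) j : b j != 0%N -> addeps (subeps b j) j = b.
Proof.
move=> nz; apply/ffunP => k; rewrite !ffunE; case: eqP => [->|//].
by rewrite ?ffunE ?eqxx prednK // lt0n.
Qed.

End Main.

Theorem lemma3p2 (R : realType) (d : nat) (H : lmodType R[i]) (ip : H -> H -> R[i])
  (A At : weights H d) :
  (0 < d)%N ->
  hilbert_space ip ->
  commuting_multishift ip A ->
  commuting_multishift ip At ->
  (forall a j, unitary_op ip (A a j)) ->
  (forall a j, unitary_op ip (At a j)) ->
  exists U : (mindex d -> H) -> (mindex d -> H),
    unitary_l2 ip U /\
    forall (j : 'I_d) (x : mindex d -> H), l2 ip x ->
      (mshift_dom ip A j x <-> mshift_dom ip At j (U x)) /\
      (mshift_dom ip A j x -> U (mshift A j x) = mshift At j (U x)).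
Proof.
move=> _ [ipH _] [_ _ cA] [_ _ cAt] hA hAt.
have hQ := Q_unitary hA; have hQt := Q_unitary hAt.
have Psurj : forall b y, exists x, P A b x = y.
  by move=> b; case: (hQ (mpath b)).
pose W b y := P At b (finv (Psurj b) y).
have Pinj : forall b, injective (P A b).
  by move=> b; apply: (unitary_inj ipH (hQ (mpath b))).
have Wlin : forall b, linear_op (W b).
  move=> b a x y; rewrite /W; case: (hQt (mpath b)) => lt _ _.
  rewrite -[P At b]/(Q At (mpath b)) -lt; congr (Q At _ _); apply: (Pinj b).
  case: (hQ (mpath b)) => l _ _; rewrite /P l.
  by rewrite !finvK.
have Wn : forall b y, hnorm ip (W b y) = hnorm ip y.
  move=> b y; rewrite /W; case: (hQt (mpath b)) => _ n _; case: (hQ (mpath b)) => _ n' _.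
  rewrite [LHS]n -[in RHS](finvK (Psurj b) y); by rewrite [RHS]n'.
have Wsurj : forall b z, exists y, W b y = z.
  move=> b z; case: (hQt (mpath b)) => _ _ s; have [w <-] := s z.
  exists (P A b w); rewrite /W; congr (Q At _ _); apply: (Pinj b); exact: finvK.
have Wint : forall a j x, W (addeps a j) (A a j x) = At a j (W a x).
  move=> a j x; rewrite /W -(P_add cAt); congr (P At _ _); apply: (Pinj (addeps a j)).
  by rewrite (finvK (Psurj (addeps a j))) (P_add cA) (finvK (Psurj a)).
have W0 : forall b, W b 0 = 0 by move=> b; apply: lin0.
pose U (x : mindex d -> H) := fun b => W b (x b).
have Un : forall x b, hnorm ip (U x b) = hnorm ip (x b) by move=> x b; apply: Wn.
have Ul2 : forall x, l2 ip (U x) <-> l2 ip x by move=> x; apply: l2_ext.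
have dom : forall (B : weights H d) j x, (forall a j, unitary_op ip (B a j)) ->
    mshift_dom ip B j x <-> l2 ip x.
  move=> B j x hB; rewrite /mshift_dom; split; first by case.
  move=> h; split => //; apply/(l2_ext (y := x)) => // b.
  by case: (hB b j).
exists U; split.
- split.
  + by move=> x /Ul2.
  + by move=> a x y _ _; apply: funext => b; rewrite /U Wlin.
  + by move=> x _; rewrite /l2nsq (psum_ext (Un x)).
  + move=> y hy; pose x b := projT1 (cid (Wsurj b (y b))).
    have Ux : U x = y.
      by apply: funext => b; rewrite /U /x; case: cid.
    by exists x => //; apply/Ul2; rewrite Ux.
- move=> j x hx; split.
    by rewrite (dom A j x hA) (dom At j (U x) hAt) Ul2.
  move=> _; apply: funext => b; rewrite /U /mshift.
  case: eqP => [_|/eqP nz]; first by apply: W0.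
  by rewrite -{1}(addeps_subeps nz) Wint.
Qed.
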